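(* Let $X$ be a real Banach space, $A$ a non-empty subset of $X$, and $F_1,F_2$ non-empty closed bounded subsets of $X$ such that $Q_{F_1}(x)=Q_{F_2}(x)$ for each $x\in A$. If $F_1,F_2$ are USUR (respectively SUR, uniquely remotal) on $A$, then $F_1\cup F_2$ is USUR (respectively SUR, uniquely remotal) on $A$.
   Context: $B_X$ is the closed unit ball. For non-empty bounded $F$, $x\in X$, $\delta\ge0$: $r(F,x)=\sup_{y\in F}\|x-y\|$, $Q_F(x,\delta)=\{y\in F:\|x-y\|\ge r(F,x)-\delta\}$, $Q_F(x)=Q_F(x,0)$. On a set $A$, $F$ is: uniquely remotal if $Q_F(x)$ is a singleton for each $x\in A$; SUR if uniquely remotal and for every $x\in A$ and $\epsilon>0$ there is $\delta>0$ with $Q_F(x,\delta)\subseteq Q_F(x)+\epsilon B_X$; USUR if uniquely remotal and for every $\epsilon>0$ there is $\delta>0$ with $Q_F(x,\delta)\subseteq Q_F(x)+\epsilon B_X$ for all $x\in A$. *)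

(* Defs.v *)
From HB Require Import structures.
From mathcomp Require Import all_boot all_order all_algebra.
From mathcomp Require Import all_classical all_reals all_analysis.
Set Implicit Arguments. Unset Strict Implicit. Unset Printing Implicit Defensive.
Import Order.TTheory GRing.Theory Num.Theory.
Import numFieldNormedType.Exports.
Local Open Scope classical_set_scope.
Local Open Scope ring_scope.

Definition farthest_rad {R : realType} {X : normedModType R}
  (F : set X) (x : X) : R := sup [set `|x - y| | y in F].

Definition Qset {R : realType} {X : normedModType R}
  (F : set X) (x : X) (delta : R) : set X :=
  [set y | F y /\ farthest_rad F x - delta <= `|x - y|].

Definition Q0 {R : realType} {X : normedModType R} (F : set X) (x : X) : set X :=
  Qset F x 0.

Definition uniquely_remotal {R : realType} {X : normedModType R}
  (F A : set X) : Prop :=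
  forall x, A x -> exists y : X, Q0 F x = [set y].

(* S `<=` T + eps B_X *)
Definition in_eps_nbhd {R : realType} {X : normedModType R}
  (S T : set X) (eps : R) : Prop :=
  forall y, S y -> exists2 z, T z & `|y - z| <= eps.

Definition SUR {R : realType} {X : normedModType R} (F A : set X) : Prop :=
  uniquely_remotal F A /\
  forall x, A x -> forall eps : R, 0 < eps ->
    exists2 delta : R, 0 < delta & in_eps_nbhd (Qset F x delta) (Q0 F x) eps.

Definition USUR {R : realType} {X : normedModType R} (F A : set X) : Prop :=
  uniquely_remotal F A /\
  forall eps : R, 0 < eps ->
    exists2 delta : R, 0 < delta &
      forall x, A x -> in_eps_nbhd (Qset F x delta) (Q0 F x) eps.

(* Main.v *)
Require Import Defs.
From HB Require Import structures.
From mathcomp Require Import all_boot all_order all_algebra.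
From mathcomp Require Import all_classical all_reals all_analysis.
Import Order.TTheory GRing.Theory Num.Theory.
Import numFieldNormedType.Exports.
Local Open Scope classical_set_scope.
Local Open Scope ring_scope.

Set Implicit Arguments.
Section Aux.
Variables (R : realType) (X : completeNormedModType R).

Lemma img_ub (F : set X) (x : X) : [bounded y | y in F] ->
  has_ubound [set `|x - y| | y in F].
Proof.
case=> M [_ HM].
have HM1 : M < M + 1 by rewrite ltrDl.
move: (HM _ HM1) => /= HB.
exists (`|x| + (M + 1)) => _ [y Fy <-].
apply: (le_trans (ler_normB _ _)).
by rewrite lerD2l; apply: HB.
Qed.

Lemma rad_eq (F : set X) x y : has_ubound [set `|x - y| | y in F] ->
  Q0 F x = [set y] -> farthest_rad F x = `|x - y|.
Proof.
move=> hub hQ.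
have : Q0 F x y by rewrite hQ.
case=> Fy h; rewrite subr0 in h.
apply/le_anti; rewrite h /=.
by apply: ub_le_sup => //; exists y.
Qed.

Lemma rad_union (F1 F2 : set X) x y :
  has_ubound [set `|x - y| | y in F1] -> has_ubound [set `|x - y| | y in F2] ->
  Q0 F1 x = [set y] -> Q0 F2 x = [set y] ->
  farthest_rad (F1 `|` F2) x = `|x - y|.
Proof.
move=> h1 h2 q1 q2.
have r1 := rad_eq h1 q1; have r2 := rad_eq h2 q2.
have : Q0 F1 x y by rewrite q1.
case=> F1y _.
apply/le_anti; apply/andP; split.
  apply: ge_sup; first by exists `|x - y|, y => //; left.
  move=> _ [z [Fz|Fz] <-].
    by rewrite -r1; apply: ub_le_sup => //; exists z.
  by rewrite -r2; apply: ub_le_sup => //; exists z.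
apply: ub_le_sup; last by exists y => //; left.
case: h1 => M1 hM1; case: h2 => M2 hM2.
exists (Num.max M1 M2) => _ [z [Fz|Fz] <-]; rewrite le_max.
  by rewrite hM1 //; exists z.
by rewrite hM2 ?orbT //; exists z.
Qed.

Lemma Qset_union (F1 F2 : set X) x y d :
  has_ubound [set `|x - y| | y in F1] -> has_ubound [set `|x - y| | y in F2] ->
  Q0 F1 x = [set y] -> Q0 F2 x = [set y] ->
  Qset (F1 `|` F2) x d = Qset F1 x d `|` Qset F2 x d.
Proof.
move=> h1 h2 q1 q2.
rewrite /Qset (rad_union h1 h2 q1 q2) (rad_eq h1 q1) (rad_eq h2 q2).
apply/seteqP; split => z /=.
  by case=> -[Fz|Fz] H; [left|right].
by case=> -[Fz H]; split => //; [left|right].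
Qed.

Lemma Qset_mono (F : set X) x d1 d2 : d1 <= d2 ->
  Qset F x d1 `<=` Qset F x d2.
Proof.
move=> hd z [Fz H]; split => //; apply: le_trans H.
by rewrite lerB.
Qed.

End Aux.

Theorem corollary2p11 (R : realType) (X : completeNormedModType R)
  (A F1 F2 : set X) :
  A !=set0 ->
  F1 !=set0 -> closed F1 -> [bounded y | y in F1] ->
  F2 !=set0 -> closed F2 -> [bounded y | y in F2] ->
  (forall x, A x -> Q0 F1 x = Q0 F2 x) ->
  [/\ (USUR F1 A -> USUR F2 A -> USUR (F1 `|` F2) A),
      (SUR F1 A -> SUR F2 A -> SUR (F1 `|` F2) A) &
      (uniquely_remotal F1 A -> uniquely_remotal F2 A ->
         uniquely_remotal (F1 `|` F2) A)].
Proof.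
move=> _ _ _ b1 _ _ b2 hQ.
have key : forall x, A x -> uniquely_remotal F1 A ->
  exists y, [/\ Q0 F1 x = [set y], Q0 F2 x = [set y],
    Q0 (F1 `|` F2) x = [set y] &
    forall d, Qset (F1 `|` F2) x d = Qset F1 x d `|` Qset F2 x d].
  move=> x Ax u1; case: (u1 x Ax) => y q1.
  have q2 : Q0 F2 x = [set y] by rewrite -hQ.
  have h1 := img_ub x b1; have h2 := img_ub x b2.
  exists y; split => //; last first.
    by move=> d; exact: (Qset_union d h1 h2 q1 q2).
  by rewrite /Q0 (Qset_union _ h1 h2 q1 q2) -/(Q0 F1 x) -/(Q0 F2 x) q1 q2 setUid.
have UR : uniquely_remotal F1 A -> uniquely_remotal (F1 `|` F2) A.
  by move=> u1 x Ax; case: (key x Ax u1) => y [_ _ q _]; exists y.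
split.
- case=> u1 s1 [u2 s2]; split; first exact: UR.
  move=> e e0; case: (s1 e e0) => d1 d10 H1; case: (s2 e e0) => d2 d20 H2.
  have m1 : Num.min d1 d2 <= d1 by rewrite ge_min lexx.
  have m2 : Num.min d1 d2 <= d2 by rewrite ge_min lexx orbT.
  exists (Num.min d1 d2); first by rewrite lt_min d10 d20.
  move=> x Ax; case: (key x Ax u1) => y [q1 q2 q hd].
  rewrite hd q => z [Hz|Hz].
    have := H1 x Ax z (@Qset_mono _ _ _ _ _ _ m1 z Hz).
    by rewrite q1.
  have := H2 x Ax z (@Qset_mono _ _ _ _ _ _ m2 z Hz).
  by rewrite q2.
- case=> u1 s1 [u2 s2]; split; first exact: UR.
  move=> x Ax e e0; case: (s1 x Ax e e0) => d1 d10 H1; case: (s2 x Ax e e0) => d2 d20 H2.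
  have m1 : Num.min d1 d2 <= d1 by rewrite ge_min lexx.
  have m2 : Num.min d1 d2 <= d2 by rewrite ge_min lexx orbT.
  exists (Num.min d1 d2); first by rewrite lt_min d10 d20.
  case: (key x Ax u1) => y [q1 q2 q hd].
  rewrite hd q => z [Hz|Hz].
    have := H1 z (@Qset_mono _ _ _ _ _ _ m1 z Hz).
    by rewrite q1.
  have := H2 z (@Qset_mono _ _ _ _ _ _ m2 z Hz).
  by rewrite q2.
- by move=> u1 _; exact: UR.
Qed.
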